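(* Let $(A,\cdot)$ be an alternative algebra and $(V,\cdot_V,\mathfrak{l},\mathfrak{r})$ an $A$-bimodule alternative algebra. Let $[x,y]=x\cdot y-y\cdot x$ on $A$ and $[a,b]_V=a\cdot_V b-b\cdot_V a$ on $V$. Then $(V;[\cdot,\cdot]_V,\mathfrak{l}-\mathfrak{r})$ is an $A$-module Malcev algebra of the Malcev algebra $(A,[\cdot,\cdot])$.
   Context: Field of characteristic zero. An alternative algebra is a vector space with bilinear product whose associator $as(x,y,z)=(xy)z-x(yz)$ satisfies $as(x,x,y)=as(y,x,x)=0$; its commutator bracket makes it a Malcev algebra. A representation of $(A,\cdot)$ is $(V,\mathfrak{l},\mathfrak{r})$ with: $\mathfrak{r}(x)\mathfrak{r}(y)+\mathfrak{r}(y)\mathfrak{r}(x)-\mathfrak{r}(x\cdot y)-\mathfrak{r}(y\cdot x)=0$; $\mathfrak{l}(x\cdot y)+\mathfrak{l}(y\cdot x)-\mathfrak{l}(x)\mathfrak{l}(y)-\mathfrak{l}(y)\mathfrak{l}(x)=0$; $\mathfrak{l}(x\cdot y)+\mathfrak{r}(y)\mathfrak{l}(x)-\mathfrak{l}(x)\mathfrak{l}(y)-\mathfrak{l}(x)\mathfrak{r}(y)=0$; $\mathfrak{r}(y)\mathfrak{l}(x)+\mathfrak{r}(y)\mathfrak{r}(x)-\mathfrak{l}(x)\mathfrak{r}(y)-\mathfrak{r}(x\cdot y)=0$. An $A$-bimodule alternative algebra is $(V,\cdot_V,\mathfrak{l},\mathfrak{r})$ with $(V,\cdot_V)$ alternative,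 $(V,\mathfrak{l},\mathfrak{r})$ a representation, and for $x\in A$, $a,b\in V$: $\mathfrak{r}(x)(a\cdot_V b)-a\cdot_V(\mathfrak{r}(x)b)+\mathfrak{r}(x)(b\cdot_V a)-b\cdot_V(\mathfrak{r}(x)a)=0$; $(\mathfrak{l}(x)a)\cdot_V b-\mathfrak{l}(x)(a\cdot_V b)+(\mathfrak{l}(x)b)\cdot_V a-\mathfrak{l}(x)(b\cdot_V a)=0$; $(\mathfrak{l}(x)a)\cdot_V b-a\cdot_V(\mathfrak{l}(x)b)+(\mathfrak{r}(x)a)\cdot_V b-\mathfrak{l}(x)(a\cdot_V b)=0$; $(\mathfrak{r}(x)a)\cdot_V b-a\cdot_V(\mathfrak{l}(x)b)+\mathfrak{r}(x)(a\cdot_V b)-a\cdot_V(\mathfrak{r}(x)b)=0$. For a Malcev algebra $(A,[\cdot,\cdot])$ (anti-symmetric bracket with $J(x,y,[x,z])=[J(x,y,z),x]$, $J$ the Jacobian), a representation is $\rho:A\to\mathrm{End}(V)$ with $\rho([[x,y],z])=\rho(x)\rho(y)\rho(z)-\rho(z)\rho(x)\rho(y)+\rho(y)\rho([z,x])-\rho([y,z])\rho(x)$, and an $A$-module Malcev algebra $(V;[\cdot,\cdot]_V,\rho)$ is a Malcev algebra $(V,[\cdot,\cdot]_V)$ with a representation $\rho$ such that for $x,y\in A$, $a,b,c\in V$: $\rho([x,y])[a,b]_V=\rho(x)[\rho(y)a,b]_V-[\rho(y)\rho(x)a,b]_V-[\rho(x)\rho(y)b,a]_V+\rho(y)[\rho(x)b,a]_V$;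 $[\rho(x)a,\rho(y)b]_V=[\rho([x,y])a,b]_V-\rho(x)[\rho(y)a,b]_V+\rho(y)\rho(x)[a,b]_V+[\rho(y)\rho(x)b,a]_V$; $[\rho(x)a,[b,c]_V]_V=[[\rho(x)b,a]_V,c]_V-\rho(x)[[b,a]_V,c]_V-[\rho(x)[a,c]_V,b]_V-[[\rho(x)c,b]_V,a]_V$. *)

(* Defs.v *)
From HB Require Import structures.
From mathcomp Require Import all_boot all_algebra.
Set Implicit Arguments. Unset Strict Implicit. Unset Printing Implicit Defensive.
Import GRing.Theory.
Local Open Scope ring_scope.

Definition bilin (F : fieldType) (U V W : lmodType F) (f : U -> V -> W) : Prop :=
  (forall (a : F) x1 x2 y, f (a *: x1 + x2) y = a *: f x1 y + f x2 y) /\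
  (forall (a : F) x y1 y2, f x (a *: y1 + y2) = a *: f x y1 + f x y2).

Definition assoc (F : fieldType) (A : lmodType F) (m : A -> A -> A) (x y z : A) : A :=
  m (m x y) z - m x (m y z).

Definition alternative (F : fieldType) (A : lmodType F) (m : A -> A -> A) : Prop :=
  bilin m /\ (forall x y, assoc m x x y = 0) /\ (forall x y, assoc m y x x = 0).

(* representation (V, l, r) of the alternative algebra (A, m);
   l x, r x : End(V), identities stated pointwise on V *)
Definition alt_rep (F : fieldType) (A V : lmodType F) (m : A -> A -> A)
  (l r : A -> V -> V) : Prop :=
  bilin l /\ bilin r /\
  (forall x y v, r x (r y v) + r y (r x v) - r (m x y) v - r (m y x) v = 0) /\
  (forall x y v, l (m x y) v + l (m y x) v - l x (l y v) - l y (l x v) = 0) /\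
  (forall x y v, l (m x y) v + r y (l x v) - l x (l y v) - l x (r y v) = 0) /\
  (forall x y v, r y (l x v) + r y (r x v) - l x (r y v) - r (m x y) v = 0).

Definition bimodule_alternative (F : fieldType) (A V : lmodType F) (m : A -> A -> A)
  (mV : V -> V -> V) (l r : A -> V -> V) : Prop :=
  alternative mV /\ alt_rep m l r /\
  (forall x a b, r x (mV a b) - mV a (r x b) + r x (mV b a) - mV b (r x a) = 0) /\
  (forall x a b, mV (l x a) b - l x (mV a b) + mV (l x b) a - l x (mV b a) = 0) /\
  (forall x a b, mV (l x a) b - mV a (l x b) + mV (r x a) b - l x (mV a b) = 0) /\
  (forall x a b, mV (r x a) b - mV a (l x b) + r x (mV a b) - mV a (r x b) = 0).

Definition commutator (F : fieldType) (A : lmodType F) (m : A -> A -> A) (x y : A) : A :=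
  m x y - m y x.

Definition jacobian (F : fieldType) (A : lmodType F) (br : A -> A -> A) (x y z : A) : A :=
  br (br x y) z + br (br y z) x + br (br z x) y.

Definition malcev (F : fieldType) (A : lmodType F) (br : A -> A -> A) : Prop :=
  bilin br /\ (forall x y, br x y = - br y x) /\
  (forall x y z, jacobian br x y (br x z) = br (jacobian br x y z) x).

Definition malcev_rep (F : fieldType) (A V : lmodType F) (br : A -> A -> A)
  (rho : A -> V -> V) : Prop :=
  bilin rho /\
  (forall x y z v, rho (br (br x y) z) v =
     rho x (rho y (rho z v)) - rho z (rho x (rho y v))
     + rho y (rho (br z x) v) - rho (br y z) (rho x v)).

Definition module_malcev (F : fieldType) (A V : lmodType F) (br : A -> A -> A)
  (brV : V -> V -> V) (rho : A -> V -> V) : Prop :=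
  malcev br /\ malcev brV /\ malcev_rep br rho /\
  (forall x y a b, rho (br x y) (brV a b) =
     rho x (brV (rho y a) b) - brV (rho y (rho x a)) b
     - brV (rho x (rho y b)) a + rho y (brV (rho x b) a)) /\
  (forall x y a b, brV (rho x a) (rho y b) =
     brV (rho (br x y) a) b - rho x (brV (rho y a) b)
     + rho y (rho x (brV a b)) + brV (rho y (rho x b)) a) /\
  (forall x a b c, brV (rho x a) (brV b c) =
     brV (brV (rho x b) a) c - rho x (brV (brV b a) c)
     - brV (rho x (brV a c)) b - brV (brV (rho x c) b) a).

(* Main.v *)
Require Import Defs.
From HB Require Import structures.
From mathcomp Require Import all_boot all_algebra.
Import GRing.Theory.
Local Open Scope ring_scope.

Inductive term := TV of nat | TM of term & term | TA of term & term | TN of term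
  | TS of int & term | TZ.
Inductive mono := MV of nat | MM of mono & mono.
Fixpoint mono_eqb (a b : mono) : bool :=
  match a, b with
  | MV n, MV k => n == k
  | MM a1 a2, MM b1 b2 => mono_eqb a1 b1 && mono_eqb a2 b2
  | _, _ => false end.
Lemma mono_eqbP a b : mono_eqb a b -> a = b.
Proof.
elim: a b => [n|a1 IH1 a2 IH2] [k|b1 b2] //=; first by move/eqP->.
by case/andP=> /IH1 -> /IH2 ->.
Qed.
Definition TC a b := TA (TM a b) (TN (TM b a)).
Fixpoint norm (t : term) : seq (int * mono) :=
  match t with
  | TV n => [:: (1, MV n)]
  | TM a b => [seq (p.1 * q.1, MM p.2 q.2) | p <- norm a, q <- norm b]
  | TA a b => norm a ++ norm b
  | TN a => [seq (- p.1, p.2) | p <- norm a]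
  | TS z a => [seq (z * p.1, p.2) | p <- norm a]
  | TZ => [::] end.
Fixpoint ins (c : int) (m : mono) (acc : seq (int * mono)) :=
  match acc with
  | [::] => [:: (c, m)]
  | p :: t => if mono_eqb m p.2 then (c + p.1, p.2) :: t else p :: ins c m t end.
Definition compress (l : seq (int * mono)) := foldr (fun p acc => ins p.1 p.2 acc) [::] l.
Definition check (l : seq (int * mono)) := all (fun p => p.1 == 0) (compress l).

Inductive cert := CL of term & term & term | CR of term & term & term
  | CML of term & cert | CMR of cert & term.
Definition asT a b c := TA (TM (TM a b) c) (TN (TM a (TM b c))).
Fixpoint certT (c : cert) : term :=
  match c with
  | CL a b c => TA (asT a b c) (asT b a c)
  | CR a b c => TA (asT a b c) (asT a c b)
  | CML t c => TM t (certT c)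
  | CMR c t => TM (certT c) t end.
Definition sumc (cs : seq (int * cert)) : term :=
  foldr (fun p acc => TA (TS p.1 (certT p.2)) acc) TZ cs.

Section Refl.
Variables (D : zmodType) (mul : D -> D -> D).
Hypothesis addL : forall a b c, mul (a + b) c = mul a c + mul b c.
Hypothesis addR : forall a b c, mul a (b + c) = mul a b + mul a c.
Definition asc a b c := mul (mul a b) c - mul a (mul b c).
Hypothesis altL : forall a b c, asc a b c + asc b a c = 0.
Hypothesis altR : forall a b c, asc a b c + asc a c b = 0.
Variable env : seq D.
Fixpoint ev (t : term) : D :=
  match t with
  | TV n => nth 0 env n
  | TM a b => mul (ev a) (ev b)
  | TA a b => ev a + ev b
  | TN a => - ev a
  | TS z a => ev a *~ z
  | TZ => 0 end.
Fixpoint evm (m : mono) : D :=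
  match m with MV n => nth 0 env n | MM a b => mul (evm a) (evm b) end.
Definition evl (l : seq (int * mono)) := foldr (fun p acc => evm p.2 *~ p.1 + acc) 0 l.

Lemma mul0l b : mul 0 b = 0.
Proof. by apply: (addrI (mul 0 b)); rewrite -addL !addr0. Qed.
Lemma mul0r b : mul b 0 = 0.
Proof. by apply: (addrI (mul b 0)); rewrite -addR !addr0. Qed.
Lemma mulNl a b : mul (- a) b = - mul a b.
Proof. by apply/eqP; rewrite -subr_eq0 opprK -addL addNr mul0l. Qed.
Lemma mulNr a b : mul b (- a) = - mul b a.
Proof. by apply/eqP; rewrite -subr_eq0 opprK -addR addNr mul0r. Qed.
Lemma mulnl a b n : mul (a *+ n) b = mul a b *+ n.
Proof. by elim: n => [|n IH]; rewrite ?mul0l // !mulrS addL IH. Qed.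
Lemma mulnr a b n : mul b (a *+ n) = mul b a *+ n.
Proof. by elim: n => [|n IH]; rewrite ?mul0r // !mulrS addR IH. Qed.
Lemma mulzl a b z : mul (a *~ z) b = mul a b *~ z.
Proof.
case: z => n; first by rewrite -(pmulrn a) -(pmulrn (mul a b)) mulnl.
by rewrite NegzE !mulrNz mulNl -(pmulrn a) -(pmulrn (mul a b)) mulnl.
Qed.
Lemma mulzr a b z : mul b (a *~ z) = mul b a *~ z.
Proof.
case: z => n; first by rewrite -(pmulrn a) -(pmulrn (mul b a)) mulnr.
by rewrite NegzE !mulrNz mulNr -(pmulrn a) -(pmulrn (mul b a)) mulnr.
Qed.

Lemma evl_cat l1 l2 : evl (l1 ++ l2) = evl l1 + evl l2.
Proof. by elim: l1 => [|p l IH] /=; rewrite ?add0r // IH addrA. Qed.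
Lemma evl_opp l : evl [seq (- p.1, p.2) | p <- l] = - evl l.
Proof. by elim: l => [|p l IH] /=; rewrite ?oppr0 // IH opprD mulrNz. Qed.
Lemma evl_scale z l : evl [seq (z * p.1, p.2) | p <- l] = evl l *~ z.
Proof.
elim: l => [|p l IH] /=; first by rewrite mul0rz.
by rewrite IH mulrzDl [z * _]mulrC mulrzA.
Qed.
Lemma evl_mul l1 l2 :
  evl [seq (p.1 * q.1, MM p.2 q.2) | p <- l1, q <- l2] = mul (evl l1) (evl l2).
Proof.
elim: l1 => [|p l1 IH] /=; first by rewrite mul0l.
rewrite evl_cat IH addL; congr (_ + _).
clear IH; elim: l2 => [|q l2 IH2] /=; first by rewrite mul0r.
rewrite IH2 addR mulzl mulzr; congr (_ + _).
by rewrite mulzl mulrzA.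
Qed.
Lemma norm_ok t : evl (norm t) = ev t.
Proof.
elim: t => [n|a IHa b IHb|a IHa b IHb|a IHa|z a IHa|] /=.
- by rewrite addr0.
- by rewrite evl_mul IHa IHb.
- by rewrite evl_cat IHa IHb.
- by rewrite evl_opp IHa.
- by rewrite evl_scale IHa.
- by [].
Qed.
Lemma ins_ok c m acc : evl (ins c m acc) = evm m *~ c + evl acc.
Proof.
elim: acc => [|p acc IH] //=.
case: ifP => [/mono_eqbP ->|_] /=.
  by rewrite mulrzDr addrA.
by rewrite IH addrCA.
Qed.
Lemma compress_ok l : evl (compress l) = evl l.
Proof. by elim: l => [|p l IH] //=; rewrite ins_ok IH. Qed.
Lemma check_ok l : check l -> evl l = 0.
Proof.
rewrite /check -compress_ok; elim: (compress l) => [|p l' IH] //= /andP[/eqP-> /IH->].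
by rewrite mulr0z addr0.
Qed.
Lemma certT_ok c : ev (certT c) = 0.
Proof.
elim: c => [a b c|a b c|t c IH|c IH t] /=.
- exact: altL.
- exact: altR.
- by rewrite IH mul0r.
- by rewrite IH mul0l.
Qed.
Lemma sumc_ok cs : ev (sumc cs) = 0.
Proof. by elim: cs => [|p cs IH] //=; rewrite IH certT_ok mul0rz addr0. Qed.
Lemma certify G cs : check (norm (TA G (TN (sumc cs)))) -> ev G = 0.
Proof. by move/check_ok; rewrite norm_ok /= sumc_ok oppr0 addr0. Qed.
End Refl.
Definition cs_Lm : seq (int * cert) := [::
  ((Posz 1), (CL (TM (TV 0) (TV 1)) (TV 2) (TV 3)));
  ((Negz 4), (CMR (CL (TV 0) (TV 1) (TV 2)) (TV 3)));
  ((Negz 0), (CL (TM (TV 0) (TV 1)) (TV 3) (TV 2)));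
  ((Negz 0), (CMR (CL (TV 0) (TV 1) (TV 3)) (TV 2)));
  ((Negz 2), (CL (TM (TV 0) (TV 2)) (TV 1) (TV 3)));
  ((Posz 1), (CL (TV 1) (TV 3) (TM (TV 0) (TV 2))));
  ((Negz 6), (CMR (CL (TV 0) (TV 2) (TV 1)) (TV 3)));
  ((Negz 0), (CML (TV 0) (CL (TV 2) (TV 3) (TV 1))));
  ((Negz 10), (CMR (CL (TV 0) (TV 2) (TV 3)) (TV 1)));
  ((Negz 1), (CL (TM (TV 0) (TV 3)) (TV 1) (TV 2)));
  ((Negz 0), (CMR (CL (TV 0) (TV 3) (TV 1)) (TV 2)));
  ((Negz 4), (CL (TM (TV 0) (TV 3)) (TV 2) (TV 1)));
  ((Negz 0), (CMR (CL (TV 0) (TV 3) (TV 2)) (TV 1)));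
  ((Posz 1), (CL (TM (TV 1) (TV 0)) (TV 2) (TV 3)));
  ((Negz 0), (CL (TM (TV 1) (TV 0)) (TV 3) (TV 2)));
  ((Negz 2), (CL (TM (TV 1) (TV 2)) (TV 0) (TV 3)));
  ((Posz 1), (CL (TV 0) (TV 3) (TM (TV 1) (TV 2))));
  ((Negz 0), (CMR (CL (TV 1) (TV 2) (TV 0)) (TV 3)));
  ((Negz 0), (CML (TV 1) (CL (TV 2) (TV 3) (TV 0))));
  ((Negz 4), (CMR (CL (TV 1) (TV 2) (TV 3)) (TV 0)));
  ((Negz 1), (CL (TM (TV 1) (TV 3)) (TV 0) (TV 2)));
  ((Posz 6), (CL (TV 0) (TV 2) (TM (TV 1) (TV 3))));
  ((Negz 0), (CMR (CL (TV 1) (TV 3) (TV 0)) (TV 2)));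
  ((Negz 4), (CL (TM (TV 1) (TV 3)) (TV 2) (TV 0)));
  ((Negz 0), (CMR (CL (TV 1) (TV 3) (TV 2)) (TV 0)));
  ((Posz 1), (CL (TM (TV 2) (TV 0)) (TV 1) (TV 3)));
  ((Posz 7), (CML (TV 2) (CL (TV 0) (TV 1) (TV 3))));
  ((Posz 8), (CML (TV 2) (CL (TV 0) (TV 3) (TV 1))));
  ((Negz 4), (CL (TM (TV 2) (TV 1)) (TV 0) (TV 3)));
  ((Posz 2), (CML (TV 2) (CL (TV 1) (TV 3) (TV 0))));
  ((Negz 7), (CL (TM (TV 2) (TV 3)) (TV 0) (TV 1)));
  ((Posz 3), (CL (TV 0) (TV 1) (TM (TV 2) (TV 3))));
  ((Posz 1), (CMR (CL (TV 2) (TV 3) (TV 0)) (TV 1)));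
  ((Negz 1), (CL (TM (TV 2) (TV 3)) (TV 1) (TV 0)));
  ((Posz 1), (CMR (CL (TV 2) (TV 3) (TV 1)) (TV 0)));
  ((Posz 6), (CL (TM (TV 3) (TV 0)) (TV 1) (TV 2)));
  ((Posz 7), (CL (TV 1) (TV 2) (TM (TV 3) (TV 0))));
  ((Negz 0), (CML (TV 3) (CL (TV 0) (TV 1) (TV 2))));
  ((Posz 7), (CL (TM (TV 3) (TV 0)) (TV 2) (TV 1)));
  ((Posz 7), (CL (TV 0) (TV 2) (TM (TV 3) (TV 1))));
  ((Posz 1), (CL (TM (TV 3) (TV 1)) (TV 2) (TV 0)));
  ((Posz 1), (CL (TV 0) (TV 1) (TM (TV 3) (TV 2))));
  ((Posz 2), (CR (TM (TV 0) (TV 1)) (TV 2) (TV 3)));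
  ((Negz 7), (CR (TV 2) (TM (TV 0) (TV 1)) (TV 3)));
  ((Negz 1), (CML (TV 0) (CR (TV 1) (TV 2) (TV 3))));
  ((Posz 2), (CMR (CR (TV 0) (TV 1) (TV 2)) (TV 3)));
  ((Posz 8), (CR (TM (TV 0) (TV 2)) (TV 1) (TV 3)));
  ((Negz 5), (CML (TV 0) (CR (TV 2) (TV 1) (TV 3))));
  ((Posz 2), (CMR (CR (TV 0) (TV 2) (TV 3)) (TV 1)));
  ((Posz 4), (CR (TM (TV 0) (TV 3)) (TV 1) (TV 2)));
  ((Posz 2), (CR (TM (TV 1) (TV 0)) (TV 2) (TV 3)));
  ((Negz 1), (CR (TV 2) (TM (TV 1) (TV 0)) (TV 3)));
  ((Negz 1), (CML (TV 1) (CR (TV 0) (TV 2) (TV 3))));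
  ((Posz 2), (CMR (CR (TV 1) (TV 0) (TV 2)) (TV 3)));
  ((Posz 2), (CR (TM (TV 1) (TV 2)) (TV 0) (TV 3)));
  ((Posz 2), (CMR (CR (TV 1) (TV 2) (TV 3)) (TV 0)));
  ((Posz 4), (CR (TM (TV 1) (TV 3)) (TV 0) (TV 2)));
  ((Posz 6), (CR (TM (TV 2) (TV 0)) (TV 1) (TV 3)));
  ((Negz 13), (CML (TV 2) (CR (TV 0) (TV 1) (TV 3))));
  ((Posz 6), (CMR (CR (TV 2) (TV 0) (TV 3)) (TV 1)));
  ((Posz 6), (CR (TM (TV 2) (TV 1)) (TV 0) (TV 3)));
  ((Negz 7), (CML (TV 2) (CR (TV 1) (TV 0) (TV 3))));
  ((Negz 5), (CR (TM (TV 3) (TV 0)) (TV 1) (TV 2)));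
  ((Negz 5), (CR (TV 1) (TM (TV 3) (TV 0)) (TV 2)))].

Definition cs_rep : seq (int * cert) := [::
  ((Posz 2), (CL (TM (TV 0) (TV 1)) (TV 2) (TV 3)));
  ((Posz 1), (CML (TV 0) (CL (TV 1) (TV 2) (TV 3))));
  ((Posz 3), (CMR (CL (TV 0) (TV 1) (TV 2)) (TV 3)));
  ((Posz 1), (CL (TM (TV 0) (TV 1)) (TV 3) (TV 2)));
  ((Posz 5), (CMR (CL (TV 0) (TV 1) (TV 3)) (TV 2)));
  ((Negz 2), (CL (TM (TV 0) (TV 2)) (TV 1) (TV 3)));
  ((Negz 0), (CMR (CL (TV 0) (TV 2) (TV 1)) (TV 3)));
  ((Negz 0), (CL (TM (TV 0) (TV 2)) (TV 3) (TV 1)));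
  ((Negz 0), (CML (TV 0) (CL (TV 2) (TV 3) (TV 1))));
  ((Negz 5), (CMR (CL (TV 0) (TV 2) (TV 3)) (TV 1)));
  ((Negz 0), (CL (TM (TV 0) (TV 3)) (TV 1) (TV 2)));
  ((Posz 2), (CL (TV 1) (TV 2) (TM (TV 0) (TV 3))));
  ((Posz 1), (CMR (CL (TV 0) (TV 3) (TV 1)) (TV 2)));
  ((Negz 1), (CL (TM (TV 0) (TV 3)) (TV 2) (TV 1)));
  ((Negz 1), (CMR (CL (TV 0) (TV 3) (TV 2)) (TV 1)));
  ((Posz 1), (CL (TV 2) (TV 3) (TM (TV 1) (TV 0))));
  ((Negz 3), (CML (TV 1) (CL (TV 0) (TV 2) (TV 3))));
  ((Negz 0), (CL (TM (TV 1) (TV 0)) (TV 3) (TV 2)));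
  ((Negz 2), (CML (TV 1) (CL (TV 0) (TV 3) (TV 2))));
  ((Posz 3), (CL (TM (TV 1) (TV 2)) (TV 0) (TV 3)));
  ((Negz 2), (CMR (CL (TV 1) (TV 2) (TV 0)) (TV 3)));
  ((Posz 1), (CML (TV 1) (CL (TV 2) (TV 3) (TV 0))));
  ((Negz 3), (CMR (CL (TV 1) (TV 2) (TV 3)) (TV 0)));
  ((Posz 2), (CL (TM (TV 1) (TV 3)) (TV 0) (TV 2)));
  ((Posz 1), (CL (TV 0) (TV 2) (TM (TV 1) (TV 3))));
  ((Negz 0), (CMR (CL (TV 1) (TV 3) (TV 0)) (TV 2)));
  ((Negz 3), (CL (TM (TV 1) (TV 3)) (TV 2) (TV 0)));
  ((Negz 2), (CL (TM (TV 2) (TV 0)) (TV 1) (TV 3)));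
  ((Posz 4), (CML (TV 2) (CL (TV 0) (TV 1) (TV 3))));
  ((Negz 0), (CL (TM (TV 2) (TV 0)) (TV 3) (TV 1)));
  ((Posz 4), (CML (TV 2) (CL (TV 0) (TV 3) (TV 1))));
  ((Negz 0), (CL (TM (TV 2) (TV 1)) (TV 0) (TV 3)));
  ((Posz 1), (CL (TV 0) (TV 3) (TM (TV 2) (TV 1))));
  ((Posz 1), (CML (TV 2) (CL (TV 1) (TV 3) (TV 0))));
  ((Negz 3), (CL (TM (TV 2) (TV 3)) (TV 0) (TV 1)));
  ((Negz 1), (CL (TV 0) (TV 1) (TM (TV 2) (TV 3))));
  ((Negz 0), (CL (TM (TV 2) (TV 3)) (TV 1) (TV 0)));
  ((Posz 1), (CL (TM (TV 3) (TV 0)) (TV 1) (TV 2)));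
  ((Posz 5), (CL (TV 1) (TV 2) (TM (TV 3) (TV 0))));
  ((Posz 4), (CL (TM (TV 3) (TV 0)) (TV 2) (TV 1)));
  ((Negz 0), (CML (TV 3) (CL (TV 0) (TV 2) (TV 1))));
  ((Posz 3), (CL (TV 0) (TV 2) (TM (TV 3) (TV 1))));
  ((Negz 2), (CL (TV 0) (TV 1) (TM (TV 3) (TV 2))));
  ((Posz 1), (CL (TM (TV 3) (TV 2)) (TV 1) (TV 0)));
  ((Negz 3), (CR (TM (TV 0) (TV 1)) (TV 2) (TV 3)));
  ((Negz 3), (CR (TV 2) (TM (TV 0) (TV 1)) (TV 3)));
  ((Posz 2), (CML (TV 0) (CR (TV 1) (TV 2) (TV 3))));
  ((Negz 1), (CMR (CR (TV 0) (TV 1) (TV 3)) (TV 2)));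
  ((Posz 4), (CR (TM (TV 0) (TV 2)) (TV 1) (TV 3)));
  ((Posz 4), (CR (TV 1) (TM (TV 0) (TV 2)) (TV 3)));
  ((Negz 1), (CML (TV 0) (CR (TV 2) (TV 1) (TV 3))));
  ((Posz 2), (CMR (CR (TV 0) (TV 2) (TV 3)) (TV 1)));
  ((Posz 2), (CR (TM (TV 0) (TV 3)) (TV 1) (TV 2)));
  ((Posz 4), (CR (TV 1) (TM (TV 0) (TV 3)) (TV 2)));
  ((Negz 1), (CR (TM (TV 1) (TV 0)) (TV 2) (TV 3)));
  ((Negz 1), (CR (TV 2) (TM (TV 1) (TV 0)) (TV 3)));
  ((Posz 6), (CML (TV 1) (CR (TV 0) (TV 2) (TV 3))));
  ((Negz 1), (CMR (CR (TV 1) (TV 0) (TV 2)) (TV 3)));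
  ((Negz 1), (CMR (CR (TV 1) (TV 0) (TV 3)) (TV 2)));
  ((Posz 2), (CR (TM (TV 1) (TV 2)) (TV 0) (TV 3)));
  ((Negz 1), (CML (TV 1) (CR (TV 2) (TV 0) (TV 3))));
  ((Posz 2), (CMR (CR (TV 1) (TV 2) (TV 3)) (TV 0)));
  ((Posz 2), (CR (TM (TV 1) (TV 3)) (TV 0) (TV 2)));
  ((Posz 4), (CR (TM (TV 2) (TV 0)) (TV 1) (TV 3)));
  ((Negz 1), (CR (TV 1) (TM (TV 2) (TV 0)) (TV 3)));
  ((Negz 5), (CML (TV 2) (CR (TV 0) (TV 1) (TV 3))));
  ((Posz 4), (CMR (CR (TV 2) (TV 0) (TV 3)) (TV 1)));
  ((Posz 4), (CR (TM (TV 2) (TV 1)) (TV 0) (TV 3)));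
  ((Negz 5), (CML (TV 2) (CR (TV 1) (TV 0) (TV 3))));
  ((Negz 1), (CR (TM (TV 3) (TV 0)) (TV 1) (TV 2)));
  ((Negz 3), (CR (TV 1) (TM (TV 3) (TV 0)) (TV 2)))].

Definition cs_T4 : seq (int * cert) := [::
  ((Posz 1), (CL (TM (TV 0) (TV 1)) (TV 2) (TV 3)));
  ((Posz 1), (CL (TV 2) (TV 3) (TM (TV 0) (TV 1))));
  ((Negz 1), (CML (TV 0) (CL (TV 1) (TV 2) (TV 3))));
  ((Negz 0), (CMR (CL (TV 0) (TV 1) (TV 2)) (TV 3)));
  ((Posz 1), (CL (TM (TV 0) (TV 1)) (TV 3) (TV 2)));
  ((Negz 2), (CMR (CL (TV 0) (TV 1) (TV 3)) (TV 2)));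
  ((Negz 2), (CMR (CL (TV 0) (TV 2) (TV 1)) (TV 3)));
  ((Negz 1), (CL (TM (TV 0) (TV 2)) (TV 3) (TV 1)));
  ((Negz 3), (CMR (CL (TV 0) (TV 2) (TV 3)) (TV 1)));
  ((Negz 4), (CL (TM (TV 0) (TV 3)) (TV 1) (TV 2)));
  ((Negz 6), (CL (TV 1) (TV 2) (TM (TV 0) (TV 3))));
  ((Posz 1), (CMR (CL (TV 0) (TV 3) (TV 1)) (TV 2)));
  ((Negz 2), (CL (TM (TV 0) (TV 3)) (TV 2) (TV 1)));
  ((Negz 1), (CMR (CL (TV 0) (TV 3) (TV 2)) (TV 1)));
  ((Posz 5), (CL (TM (TV 1) (TV 0)) (TV 2) (TV 3)));
  ((Posz 2), (CML (TV 1) (CL (TV 0) (TV 2) (TV 3))));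
  ((Posz 1), (CL (TM (TV 1) (TV 0)) (TV 3) (TV 2)));
  ((Posz 4), (CML (TV 1) (CL (TV 0) (TV 3) (TV 2))));
  ((Negz 2), (CL (TM (TV 1) (TV 2)) (TV 0) (TV 3)));
  ((Negz 0), (CL (TV 0) (TV 3) (TM (TV 1) (TV 2))));
  ((Posz 7), (CMR (CL (TV 1) (TV 2) (TV 0)) (TV 3)));
  ((Posz 1), (CML (TV 1) (CL (TV 2) (TV 3) (TV 0))));
  ((Posz 1), (CMR (CL (TV 1) (TV 2) (TV 3)) (TV 0)));
  ((Negz 1), (CL (TM (TV 1) (TV 3)) (TV 0) (TV 2)));
  ((Posz 4), (CL (TV 0) (TV 2) (TM (TV 1) (TV 3))));
  ((Posz 1), (CMR (CL (TV 1) (TV 3) (TV 0)) (TV 2)));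
  ((Posz 1), (CL (TM (TV 1) (TV 3)) (TV 2) (TV 0)));
  ((Posz 1), (CMR (CL (TV 1) (TV 3) (TV 2)) (TV 0)));
  ((Posz 2), (CL (TM (TV 2) (TV 0)) (TV 1) (TV 3)));
  ((Negz 0), (CL (TV 1) (TV 3) (TM (TV 2) (TV 0))));
  ((Posz 3), (CML (TV 2) (CL (TV 0) (TV 1) (TV 3))));
  ((Posz 3), (CML (TV 2) (CL (TV 0) (TV 3) (TV 1))));
  ((Negz 4), (CL (TM (TV 2) (TV 1)) (TV 0) (TV 3)));
  ((Posz 1), (CL (TV 0) (TV 3) (TM (TV 2) (TV 1))));
  ((Negz 1), (CML (TV 2) (CL (TV 1) (TV 3) (TV 0))));
  ((Negz 1), (CL (TM (TV 2) (TV 3)) (TV 0) (TV 1)));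
  ((Posz 4), (CL (TV 0) (TV 1) (TM (TV 2) (TV 3))));
  ((Posz 1), (CL (TM (TV 2) (TV 3)) (TV 1) (TV 0)));
  ((Negz 0), (CMR (CL (TV 2) (TV 3) (TV 1)) (TV 0)));
  ((Posz 1), (CL (TM (TV 3) (TV 0)) (TV 1) (TV 2)));
  ((Negz 1), (CL (TV 1) (TV 2) (TM (TV 3) (TV 0))));
  ((Posz 1), (CML (TV 3) (CL (TV 0) (TV 1) (TV 2))));
  ((Posz 3), (CL (TM (TV 3) (TV 0)) (TV 2) (TV 1)));
  ((Negz 0), (CML (TV 3) (CL (TV 0) (TV 2) (TV 1))));
  ((Posz 2), (CL (TV 0) (TV 2) (TM (TV 3) (TV 1))));
  ((Negz 0), (CL (TM (TV 3) (TV 1)) (TV 2) (TV 0)));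
  ((Posz 2), (CL (TV 0) (TV 1) (TM (TV 3) (TV 2))));
  ((Posz 1), (CL (TM (TV 3) (TV 2)) (TV 1) (TV 0)));
  ((Posz 2), (CR (TM (TV 0) (TV 1)) (TV 2) (TV 3)));
  ((Negz 3), (CR (TV 2) (TM (TV 0) (TV 1)) (TV 3)));
  ((Negz 1), (CML (TV 0) (CR (TV 1) (TV 2) (TV 3))));
  ((Negz 1), (CMR (CR (TV 0) (TV 1) (TV 2)) (TV 3)));
  ((Posz 4), (CR (TM (TV 0) (TV 2)) (TV 1) (TV 3)));
  ((Negz 3), (CR (TV 1) (TM (TV 0) (TV 2)) (TV 3)));
  ((Negz 1), (CML (TV 0) (CR (TV 2) (TV 1) (TV 3))));
  ((Posz 2), (CMR (CR (TV 0) (TV 2) (TV 3)) (TV 1)));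
  ((Posz 4), (CR (TM (TV 0) (TV 3)) (TV 1) (TV 2)));
  ((Posz 4), (CR (TV 1) (TM (TV 0) (TV 3)) (TV 2)));
  ((Posz 2), (CR (TV 2) (TM (TV 1) (TV 0)) (TV 3)));
  ((Negz 5), (CML (TV 1) (CR (TV 0) (TV 2) (TV 3))));
  ((Negz 3), (CMR (CR (TV 1) (TV 0) (TV 2)) (TV 3)));
  ((Posz 2), (CMR (CR (TV 1) (TV 0) (TV 3)) (TV 2)));
  ((Negz 1), (CR (TM (TV 1) (TV 3)) (TV 0) (TV 2)));
  ((Posz 2), (CR (TM (TV 2) (TV 0)) (TV 1) (TV 3)));
  ((Negz 5), (CML (TV 2) (CR (TV 0) (TV 1) (TV 3))));
  ((Posz 2), (CMR (CR (TV 2) (TV 0) (TV 3)) (TV 1)));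
  ((Negz 1), (CR (TM (TV 2) (TV 1)) (TV 0) (TV 3)));
  ((Posz 4), (CML (TV 2) (CR (TV 1) (TV 0) (TV 3))));
  ((Negz 1), (CR (TM (TV 3) (TV 0)) (TV 1) (TV 2)));
  ((Posz 2), (CR (TV 1) (TM (TV 3) (TV 0)) (TV 2)))].

Definition cs_T5 : seq (int * cert) := [::
  ((Negz 0), (CL (TM (TV 0) (TV 1)) (TV 2) (TV 3)));
  ((Negz 0), (CML (TV 0) (CL (TV 1) (TV 2) (TV 3))));
  ((Negz 7), (CMR (CL (TV 0) (TV 1) (TV 2)) (TV 3)));
  ((Negz 1), (CL (TM (TV 0) (TV 1)) (TV 3) (TV 2)));
  ((Negz 5), (CMR (CL (TV 0) (TV 1) (TV 3)) (TV 2)));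
  ((Posz 1), (CL (TV 1) (TV 3) (TM (TV 0) (TV 2))));
  ((Negz 5), (CMR (CL (TV 0) (TV 2) (TV 1)) (TV 3)));
  ((Posz 1), (CL (TM (TV 0) (TV 2)) (TV 3) (TV 1)));
  ((Negz 4), (CMR (CL (TV 0) (TV 2) (TV 3)) (TV 1)));
  ((Negz 0), (CL (TM (TV 0) (TV 3)) (TV 1) (TV 2)));
  ((Negz 1), (CL (TV 1) (TV 2) (TM (TV 0) (TV 3))));
  ((Negz 1), (CMR (CL (TV 0) (TV 3) (TV 1)) (TV 2)));
  ((Negz 2), (CL (TM (TV 0) (TV 3)) (TV 2) (TV 1)));
  ((Posz 1), (CMR (CL (TV 0) (TV 3) (TV 2)) (TV 1)));
  ((Posz 1), (CL (TM (TV 1) (TV 0)) (TV 2) (TV 3)));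
  ((Negz 0), (CL (TV 2) (TV 3) (TM (TV 1) (TV 0))));
  ((Posz 4), (CML (TV 1) (CL (TV 0) (TV 2) (TV 3))));
  ((Posz 3), (CML (TV 1) (CL (TV 0) (TV 3) (TV 2))));
  ((Negz 5), (CL (TM (TV 1) (TV 2)) (TV 0) (TV 3)));
  ((Posz 1), (CL (TV 0) (TV 3) (TM (TV 1) (TV 2))));
  ((Posz 2), (CMR (CL (TV 1) (TV 2) (TV 0)) (TV 3)));
  ((Negz 1), (CML (TV 1) (CL (TV 2) (TV 3) (TV 0))));
  ((Negz 0), (CMR (CL (TV 1) (TV 2) (TV 3)) (TV 0)));
  ((Negz 3), (CL (TM (TV 1) (TV 3)) (TV 0) (TV 2)));
  ((Posz 5), (CL (TV 0) (TV 2) (TM (TV 1) (TV 3))));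
  ((Negz 0), (CL (TM (TV 1) (TV 3)) (TV 2) (TV 0)));
  ((Negz 0), (CMR (CL (TV 1) (TV 3) (TV 2)) (TV 0)));
  ((Posz 4), (CL (TM (TV 2) (TV 0)) (TV 1) (TV 3)));
  ((Posz 3), (CML (TV 2) (CL (TV 0) (TV 1) (TV 3))));
  ((Posz 1), (CL (TM (TV 2) (TV 0)) (TV 3) (TV 1)));
  ((Posz 4), (CML (TV 2) (CL (TV 0) (TV 3) (TV 1))));
  ((Negz 3), (CL (TM (TV 2) (TV 1)) (TV 0) (TV 3)));
  ((Negz 0), (CL (TV 0) (TV 3) (TM (TV 2) (TV 1))));
  ((Posz 1), (CML (TV 2) (CL (TV 1) (TV 3) (TV 0))));
  ((Negz 3), (CL (TM (TV 2) (TV 3)) (TV 0) (TV 1)));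
  ((Posz 5), (CL (TV 0) (TV 1) (TM (TV 2) (TV 3))));
  ((Posz 1), (CMR (CL (TV 2) (TV 3) (TV 0)) (TV 1)));
  ((Negz 0), (CL (TM (TV 2) (TV 3)) (TV 1) (TV 0)));
  ((Posz 1), (CMR (CL (TV 2) (TV 3) (TV 1)) (TV 0)));
  ((Posz 5), (CL (TM (TV 3) (TV 0)) (TV 1) (TV 2)));
  ((Posz 2), (CL (TV 1) (TV 2) (TM (TV 3) (TV 0))));
  ((Negz 0), (CML (TV 3) (CL (TV 0) (TV 1) (TV 2))));
  ((Posz 3), (CL (TM (TV 3) (TV 0)) (TV 2) (TV 1)));
  ((Posz 1), (CML (TV 3) (CL (TV 0) (TV 2) (TV 1))));
  ((Posz 4), (CL (TV 0) (TV 2) (TM (TV 3) (TV 1))));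
  ((Posz 1), (CL (TM (TV 3) (TV 1)) (TV 2) (TV 0)));
  ((Posz 4), (CL (TV 0) (TV 1) (TM (TV 3) (TV 2))));
  ((Negz 0), (CL (TM (TV 3) (TV 2)) (TV 1) (TV 0)));
  ((Posz 6), (CR (TM (TV 0) (TV 1)) (TV 2) (TV 3)));
  ((Negz 3), (CR (TV 2) (TM (TV 0) (TV 1)) (TV 3)));
  ((Negz 3), (CML (TV 0) (CR (TV 1) (TV 2) (TV 3))));
  ((Posz 2), (CMR (CR (TV 0) (TV 1) (TV 2)) (TV 3)));
  ((Posz 2), (CMR (CR (TV 0) (TV 1) (TV 3)) (TV 2)));
  ((Posz 4), (CR (TM (TV 0) (TV 2)) (TV 1) (TV 3)));
  ((Negz 3), (CR (TV 1) (TM (TV 0) (TV 2)) (TV 3)));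
  ((Negz 3), (CML (TV 0) (CR (TV 2) (TV 1) (TV 3))));
  ((Posz 2), (CR (TM (TV 0) (TV 3)) (TV 1) (TV 2)));
  ((Negz 3), (CR (TV 1) (TM (TV 0) (TV 3)) (TV 2)));
  ((Posz 4), (CR (TM (TV 1) (TV 0)) (TV 2) (TV 3)));
  ((Negz 7), (CML (TV 1) (CR (TV 0) (TV 2) (TV 3))));
  ((Posz 4), (CMR (CR (TV 1) (TV 0) (TV 2)) (TV 3)));
  ((Posz 2), (CMR (CR (TV 1) (TV 0) (TV 3)) (TV 2)));
  ((Posz 2), (CML (TV 1) (CR (TV 2) (TV 0) (TV 3))));
  ((Posz 2), (CR (TM (TV 1) (TV 3)) (TV 0) (TV 2)));
  ((Posz 2), (CR (TM (TV 2) (TV 0)) (TV 1) (TV 3)));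
  ((Posz 2), (CR (TV 1) (TM (TV 2) (TV 0)) (TV 3)));
  ((Negz 7), (CML (TV 2) (CR (TV 0) (TV 1) (TV 3))));
  ((Posz 2), (CMR (CR (TV 2) (TV 0) (TV 3)) (TV 1)));
  ((Posz 2), (CR (TM (TV 2) (TV 1)) (TV 0) (TV 3)));
  ((Negz 1), (CML (TV 2) (CR (TV 1) (TV 0) (TV 3))));
  ((Negz 3), (CR (TM (TV 3) (TV 0)) (TV 1) (TV 2)));
  ((Negz 1), (CR (TV 1) (TM (TV 3) (TV 0)) (TV 2)))].

Definition cs_T6 : seq (int * cert) := [::
  ((Posz 1), (CL (TM (TV 0) (TV 1)) (TV 2) (TV 3)));
  ((Posz 1), (CL (TV 2) (TV 3) (TM (TV 0) (TV 1))));
  ((Negz 1), (CML (TV 0) (CL (TV 1) (TV 2) (TV 3))));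
  ((Negz 0), (CMR (CL (TV 0) (TV 1) (TV 2)) (TV 3)));
  ((Posz 1), (CL (TM (TV 0) (TV 1)) (TV 3) (TV 2)));
  ((Negz 2), (CMR (CL (TV 0) (TV 1) (TV 3)) (TV 2)));
  ((Negz 2), (CMR (CL (TV 0) (TV 2) (TV 1)) (TV 3)));
  ((Negz 1), (CL (TM (TV 0) (TV 2)) (TV 3) (TV 1)));
  ((Negz 3), (CMR (CL (TV 0) (TV 2) (TV 3)) (TV 1)));
  ((Negz 4), (CL (TM (TV 0) (TV 3)) (TV 1) (TV 2)));
  ((Negz 6), (CL (TV 1) (TV 2) (TM (TV 0) (TV 3))));
  ((Posz 1), (CMR (CL (TV 0) (TV 3) (TV 1)) (TV 2)));
  ((Negz 2), (CL (TM (TV 0) (TV 3)) (TV 2) (TV 1)));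
  ((Negz 1), (CMR (CL (TV 0) (TV 3) (TV 2)) (TV 1)));
  ((Posz 5), (CL (TM (TV 1) (TV 0)) (TV 2) (TV 3)));
  ((Posz 2), (CML (TV 1) (CL (TV 0) (TV 2) (TV 3))));
  ((Posz 1), (CL (TM (TV 1) (TV 0)) (TV 3) (TV 2)));
  ((Posz 4), (CML (TV 1) (CL (TV 0) (TV 3) (TV 2))));
  ((Negz 2), (CL (TM (TV 1) (TV 2)) (TV 0) (TV 3)));
  ((Negz 0), (CL (TV 0) (TV 3) (TM (TV 1) (TV 2))));
  ((Posz 7), (CMR (CL (TV 1) (TV 2) (TV 0)) (TV 3)));
  ((Posz 1), (CML (TV 1) (CL (TV 2) (TV 3) (TV 0))));
  ((Posz 1), (CMR (CL (TV 1) (TV 2) (TV 3)) (TV 0)));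
  ((Negz 1), (CL (TM (TV 1) (TV 3)) (TV 0) (TV 2)));
  ((Posz 4), (CL (TV 0) (TV 2) (TM (TV 1) (TV 3))));
  ((Posz 1), (CMR (CL (TV 1) (TV 3) (TV 0)) (TV 2)));
  ((Posz 1), (CL (TM (TV 1) (TV 3)) (TV 2) (TV 0)));
  ((Posz 1), (CMR (CL (TV 1) (TV 3) (TV 2)) (TV 0)));
  ((Posz 2), (CL (TM (TV 2) (TV 0)) (TV 1) (TV 3)));
  ((Negz 0), (CL (TV 1) (TV 3) (TM (TV 2) (TV 0))));
  ((Posz 3), (CML (TV 2) (CL (TV 0) (TV 1) (TV 3))));
  ((Posz 3), (CML (TV 2) (CL (TV 0) (TV 3) (TV 1))));
  ((Negz 4), (CL (TM (TV 2) (TV 1)) (TV 0) (TV 3)));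
  ((Posz 1), (CL (TV 0) (TV 3) (TM (TV 2) (TV 1))));
  ((Negz 1), (CML (TV 2) (CL (TV 1) (TV 3) (TV 0))));
  ((Negz 1), (CL (TM (TV 2) (TV 3)) (TV 0) (TV 1)));
  ((Posz 4), (CL (TV 0) (TV 1) (TM (TV 2) (TV 3))));
  ((Posz 1), (CL (TM (TV 2) (TV 3)) (TV 1) (TV 0)));
  ((Negz 0), (CMR (CL (TV 2) (TV 3) (TV 1)) (TV 0)));
  ((Posz 1), (CL (TM (TV 3) (TV 0)) (TV 1) (TV 2)));
  ((Negz 1), (CL (TV 1) (TV 2) (TM (TV 3) (TV 0))));
  ((Posz 1), (CML (TV 3) (CL (TV 0) (TV 1) (TV 2))));
  ((Posz 3), (CL (TM (TV 3) (TV 0)) (TV 2) (TV 1)));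
  ((Negz 0), (CML (TV 3) (CL (TV 0) (TV 2) (TV 1))));
  ((Posz 2), (CL (TV 0) (TV 2) (TM (TV 3) (TV 1))));
  ((Negz 0), (CL (TM (TV 3) (TV 1)) (TV 2) (TV 0)));
  ((Posz 2), (CL (TV 0) (TV 1) (TM (TV 3) (TV 2))));
  ((Posz 1), (CL (TM (TV 3) (TV 2)) (TV 1) (TV 0)));
  ((Posz 2), (CR (TM (TV 0) (TV 1)) (TV 2) (TV 3)));
  ((Negz 3), (CR (TV 2) (TM (TV 0) (TV 1)) (TV 3)));
  ((Negz 1), (CML (TV 0) (CR (TV 1) (TV 2) (TV 3))));
  ((Negz 1), (CMR (CR (TV 0) (TV 1) (TV 2)) (TV 3)));
  ((Posz 4), (CR (TM (TV 0) (TV 2)) (TV 1) (TV 3)));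
  ((Negz 3), (CR (TV 1) (TM (TV 0) (TV 2)) (TV 3)));
  ((Negz 1), (CML (TV 0) (CR (TV 2) (TV 1) (TV 3))));
  ((Posz 2), (CMR (CR (TV 0) (TV 2) (TV 3)) (TV 1)));
  ((Posz 4), (CR (TM (TV 0) (TV 3)) (TV 1) (TV 2)));
  ((Posz 4), (CR (TV 1) (TM (TV 0) (TV 3)) (TV 2)));
  ((Posz 2), (CR (TV 2) (TM (TV 1) (TV 0)) (TV 3)));
  ((Negz 5), (CML (TV 1) (CR (TV 0) (TV 2) (TV 3))));
  ((Negz 3), (CMR (CR (TV 1) (TV 0) (TV 2)) (TV 3)));
  ((Posz 2), (CMR (CR (TV 1) (TV 0) (TV 3)) (TV 2)));
  ((Negz 1), (CR (TM (TV 1) (TV 3)) (TV 0) (TV 2)));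
  ((Posz 2), (CR (TM (TV 2) (TV 0)) (TV 1) (TV 3)));
  ((Negz 5), (CML (TV 2) (CR (TV 0) (TV 1) (TV 3))));
  ((Posz 2), (CMR (CR (TV 2) (TV 0) (TV 3)) (TV 1)));
  ((Negz 1), (CR (TM (TV 2) (TV 1)) (TV 0) (TV 3)));
  ((Posz 4), (CML (TV 2) (CR (TV 1) (TV 0) (TV 3))));
  ((Negz 1), (CR (TM (TV 3) (TV 0)) (TV 1) (TV 2)));
  ((Posz 2), (CR (TV 1) (TM (TV 3) (TV 0)) (TV 2)))].

Definition TJ a b c := TA (TA (TC (TC a b) c) (TC (TC b c) a)) (TC (TC c a) b).
Definition X0 := TV 0. Definition X1 := TV 1. Definition X2 := TV 2. Definition X3 := TV 3.
Definition G_Lm := TA (TA (TJ X0 X2 (TC X1 X3)) (TJ X1 X2 (TC X0 X3)))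
   (TN (TA (TC (TJ X0 X2 X3) X1) (TC (TJ X1 X2 X3) X0))).
Definition G_rep := let x := X0 in let y := X1 in let z := X2 in let v := X3 in
  TA (TC (TC (TC x y) z) v) (TN (TA (TA (TA (TC x (TC y (TC z v))) (TN (TC z (TC x (TC y v)))))
     (TC y (TC (TC z x) v))) (TN (TC (TC y z) (TC x v))))).
Definition G_T4 := let x := X0 in let y := X1 in let a := X2 in let b := X3 in
  TA (TC (TC x y) (TC a b)) (TN (TA (TA (TA (TC x (TC (TC y a) b)) (TN (TC (TC y (TC x a)) b)))
     (TN (TC (TC x (TC y b)) a))) (TC y (TC (TC x b) a)))).
Definition G_T5 := let x := X0 in let y := X1 in let a := X2 in let b := X3 in
  TA (TC (TC x a) (TC y b)) (TN (TA (TA (TA (TC (TC (TC x y) a) b) (TN (TC x (TC (TC y a) b))))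
     (TC y (TC x (TC a b)))) (TC (TC y (TC x b)) a))).
Definition G_T6 := let x := X0 in let a := X1 in let b := X2 in let c := X3 in
  TA (TC (TC x a) (TC b c)) (TN (TA (TA (TA (TC (TC (TC x b) a) c) (TN (TC x (TC (TC b a) c))))
     (TN (TC (TC x (TC a c)) b))) (TN (TC (TC (TC x c) b) a)))).
Lemma ok_Lm : check (norm (TA G_Lm (TN (sumc cs_Lm)))). Proof. by vm_compute. Qed.
Lemma ok_rep : check (norm (TA G_rep (TN (sumc cs_rep)))). Proof. by vm_compute. Qed.
Lemma ok_T4 : check (norm (TA G_T4 (TN (sumc cs_T4)))). Proof. by vm_compute. Qed.
Lemma ok_T5 : check (norm (TA G_T5 (TN (sumc cs_T5)))). Proof. by vm_compute. Qed.
Lemma ok_T6 : check (norm (TA G_T6 (TN (sumc cs_T6)))). Proof. by vm_compute. Qed.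

Section Gen.
Variables (D : zmodType) (mul : D -> D -> D).
Hypothesis addL : forall a b c, mul (a + b) c = mul a c + mul b c.
Hypothesis addR : forall a b c, mul a (b + c) = mul a b + mul a c.
Hypothesis altL : forall a b c, @asc D mul a b c + @asc D mul b a c = 0.
Hypothesis altR : forall a b c, @asc D mul a b c + @asc D mul a c b = 0.
Let br a b := mul a b - mul b a.
Let Jb a b c := br (br a b) c + br (br b c) a + br (br c a) b.
Lemma subr0_eq (u v : D) : u - v = 0 -> u = v.
Proof. by move/eqP; rewrite subr_eq0 => /eqP. Qed.
Lemma gen_Lm x w y z :
  Jb x y (br w z) + Jb w y (br x z) - (br (Jb x y z) w + br (Jb w y z) x) = 0.
Proof. exact: (@certify D mul addL addR altL altR [:: x; w; y; z] _ _ ok_Lm). Qed.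
Lemma gen_rep x y z v : br (br (br x y) z) v =
  br x (br y (br z v)) - br z (br x (br y v)) + br y (br (br z x) v) - br (br y z) (br x v).
Proof. apply: subr0_eq; exact: (@certify D mul addL addR altL altR [:: x; y; z; v] _ _ ok_rep). Qed.
Lemma gen_T4 x y a b : br (br x y) (br a b) =
  br x (br (br y a) b) - br (br y (br x a)) b - br (br x (br y b)) a + br y (br (br x b) a).
Proof. apply: subr0_eq; exact: (@certify D mul addL addR altL altR [:: x; y; a; b] _ _ ok_T4). Qed.
Lemma gen_T5 x y a b : br (br x a) (br y b) =
  br (br (br x y) a) b - br x (br (br y a) b) + br y (br x (br a b)) + br (br y (br x b)) a.
Proof. apply: subr0_eq; exact: (@certify D mul addL addR altL altR [:: x; y; a; b] _ _ ok_T5). Qed.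
Lemma gen_T6 x a b c : br (br x a) (br b c) =
  br (br (br x b) a) c - br x (br (br b a) c) - br (br x (br a c)) b - br (br (br x c) b) a.
Proof. apply: subr0_eq; exact: (@certify D mul addL addR altL altR [:: x; a; b; c] _ _ ok_T6). Qed.
End Gen.


Lemma grp_ok (V : zmodType) (env : seq V) t : check (norm t) -> @ev V (fun _ _ => 0) env t = 0.
Proof.
move=> h; apply: (@certify V (fun _ _ => 0) _ _ _ _ env t [::]).
- by move=> *; rewrite addr0.
- by move=> *; rewrite addr0.
- by move=> *; rewrite /asc !subrr addr0.
- by move=> *; rewrite /asc !subrr addr0.
- by move: h => /=; rewrite cats0.
Qed.
Lemma subr0_eq' (V : zmodType) (u v : V) : u - v = 0 -> u = v.
Proof. by move/eqP; rewrite subr_eq0 => /eqP. Qed.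

Ltac lookup x l :=
  lazymatch l with
  | cons ?y ?t => match goal with
       | _ => let _ := constr:(@erefl _ x : x = y) in constr:(0%N)
       | _ => let n := lookup x t in constr:(S n) end
  end.
Ltac reify e envr :=
  lazymatch e with
  | ?a + ?b => let r1 := reify a envr in
      lazymatch r1 with (?t1, ?e1) => let r2 := reify b e1 in
      lazymatch r2 with (?t2, ?e2) => constr:((TA t1 t2, e2)) end end
  | - ?a => let r1 := reify a envr in
      lazymatch r1 with (?t1, ?e1) => constr:((TN t1, e1)) end
  | 0 => constr:((TZ, envr))
  | _ => match goal with
         | _ => let k := lookup e envr in
                let n := eval compute in (size envr - 1 - k)%N in constr:((TV n, envr))
         | _ => let n := eval compute in (size envr) in constr:((TV n, cons e envr))
         end
  end.
Ltac grp :=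
  apply: subr0_eq';
  lazymatch goal with |- ?e = 0 =>
    let T := type of e in
    let r := reify e (@nil T) in
    lazymatch r with (?t, ?envr) =>
      exact (@grp_ok _ (rev envr) t ltac:(vm_compute; reflexivity))
    end
  end.



Lemma addHyp {W : zmodType} {e E : W} : e = 0 -> E - e = 0 -> E = 0.
Proof. by move=> ->; rewrite subr0. Qed.
Lemma addHypN {W : zmodType} {e E : W} : e = 0 -> E + e = 0 -> E = 0.
Proof. by move=> ->; rewrite addr0. Qed.

Section Lin.
Variable F : fieldType.
Lemma bilin_addl {U W X : lmodType F} {f : U -> W -> X} :
  bilin f -> forall a b c, f (a + b) c = f a c + f b c.
Proof. by case=> h _ a b c; have := h 1 a b c; rewrite !scale1r. Qed.
Lemma bilin_addr {U W X : lmodType F} {f : U -> W -> X} :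
  bilin f -> forall a b c, f c (a + b) = f c a + f c b.
Proof. by case=> _ h a b c; have := h 1 c a b; rewrite !scale1r. Qed.

Lemma alt_lin {A : lmodType F} {m : A -> A -> A} : alternative m ->
  (forall a b c, assoc m a b c + assoc m b a c = 0) /\
  (forall a b c, assoc m a b c + assoc m a c b = 0).
Proof.
case=> hb [h1 h2]; have aL := bilin_addl hb; have aR := bilin_addr hb.
split=> a b c.
- apply: (addHyp (h1 (a + b) c)); apply: (addHypN (h1 a c)); apply: (addHypN (h1 b c)).
  rewrite /assoc ?aL ?aR ?aL ?aR ?aL ?aR; grp.
- apply: (addHyp (h2 (b + c) a)); apply: (addHypN (h2 b a)); apply: (addHypN (h2 c a)).
  rewrite /assoc ?aL ?aR ?aL ?aR ?aL ?aR; grp.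
Qed.

Lemma twice0 {U : lmodType F} {u : U} : [pchar F] =i pred0 -> u + u = 0 -> u = 0.
Proof.
move=> hc h; have h2 : (2%:R : F) != 0 by rewrite (pcharf0P _).1.
have : (2%:R^-1 : F) *: (u + u) = 0 by rewrite h scaler0.
by rewrite -mulr2n -scaler_nat scalerA mulVf // scale1r.
Qed.

Lemma malcev_alt (A : lmodType F) (m : A -> A -> A) :
  [pchar F] =i pred0 -> alternative m -> malcev (commutator m).
Proof.
move=> hc hA; have [hL hR] := alt_lin hA.
case: hA => hb _; have aL := bilin_addl hb; have aR := bilin_addr hb.
split; last split.
- case: hb => h1 h2; split=> a x y z; rewrite /commutator ?h1 ?h2 scalerBr; grp.
- by move=> x y; rewrite /commutator opprB.
- move=> x y z; apply: subr0_eq'; apply: (twice0 hc).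
  rewrite -[RHS](@gen_Lm A m aL (fun a b c => aR b c a) hL hR x x y z) /jacobian /commutator; grp.
Qed.
End Lin.
Arguments bilin_addl {F U W X f}.
Arguments bilin_addr {F U W X f}.
Arguments alt_lin {F A m}.
Arguments twice0 {F U u}.

Lemma addfun0l {U W X : zmodType} (f : U -> W -> X) :
  (forall a b c, f (a + b) c = f a c + f b c) -> forall c, f 0 c = 0.
Proof. by move=> h c; apply: (addrI (f 0 c)); rewrite -h !addr0. Qed.
Lemma addfun0r {U W X : zmodType} (f : U -> W -> X) :
  (forall a b c, f c (a + b) = f c a + f c b) -> forall c, f c 0 = 0.
Proof. by move=> h c; apply: (addrI (f c 0)); rewrite -h !addr0. Qed.

Section Semi.
Variables (F : fieldType) (A V : lmodType F) (m : A -> A -> A) (mV : V -> V -> V)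
  (l r : A -> V -> V).
Hypothesis hA : alternative m.
Hypothesis hB : bimodule_alternative m mV l r.

Definition mulD (p q : (A * V)%type) : (A * V)%type :=
  (m p.1 q.1, l p.1 q.2 + r q.1 p.2 + mV p.2 q.2).

Lemma pairD (u u' : A) (v v' : V) : ((u, v) + (u', v') : (A * V)%type) = (u + u', v + v').
Proof. by []. Qed.
Lemma pairN (u : A) (v : V) : (- (u, v) : (A * V)%type) = (- u, - v).
Proof. by []. Qed.
Lemma pair_eq0 (u : A) (v : V) : u = 0 -> v = 0 -> ((u, v) : (A * V)%type) = 0.
Proof. by move=> -> ->. Qed.

Ltac unpack := case: hA => mb [a1 a2]; case: hB =>
  [[mVb [v1 v2]] [[lb [rb [R1 [R2 [R3 R4]]]]] [B1 [B2 [B3 B4]]]]].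

Lemma addLD (p q s : (A * V)%type) : mulD (p + q) s = mulD p s + mulD q s.
Proof.
unpack; case: p q s => [x1 b1] [x2 b2] [x3 b3].
rewrite pairD /mulD /= pairD; congr pair; first by rewrite (bilin_addl mb).
rewrite (bilin_addl lb) (bilin_addr rb) (bilin_addl mVb); grp.
Qed.
Lemma addRD (p q s : (A * V)%type) : mulD p (q + s) = mulD p q + mulD p s.
Proof.
unpack; case: p q s => [x1 b1] [x2 b2] [x3 b3].
rewrite pairD /mulD /= pairD; congr pair; first exact: (bilin_addr mb).
rewrite (bilin_addr lb) (bilin_addl rb) (bilin_addr mVb); grp.
Qed.

Lemma altLD (p q s : (A * V)%type) : @asc _ mulD p q s + @asc _ mulD q p s = 0.
Proof.
have [hAL _] := alt_lin hA.
have [hVL _] := alt_lin hB.1.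
unpack; case: p q s => [x1 b1] [x2 b2] [x3 b3].
rewrite /asc /mulD /=; apply: pair_eq0 => /=.
  by apply: (addHyp (hAL x1 x2 x3)); rewrite /assoc; grp.
rewrite ?(bilin_addr rb) ?(bilin_addl mVb) ?(bilin_addr lb) ?(bilin_addr mVb).
rewrite ?(bilin_addr rb) ?(bilin_addl mVb) ?(bilin_addr lb) ?(bilin_addr mVb).
apply: (addHyp (R2 x1 x2 b3)); apply: (addHyp (R4 x2 x3 b1)); apply: (addHyp (R4 x1 x3 b2)).
apply: (addHyp (B1 x3 b1 b2)); apply: (addHyp (B3 x2 b1 b3)); apply: (addHyp (B3 x1 b2 b3)).
apply: (addHyp (hVL b1 b2 b3)); rewrite /assoc; grp.
Qed.

Lemma altRD (p q s : (A * V)%type) : @asc _ mulD p q s + @asc _ mulD p s q = 0.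
Proof.
have [_ hAR] := alt_lin hA.
have [_ hVR] := alt_lin hB.1.
unpack; case: p q s => [x1 b1] [x2 b2] [x3 b3].
rewrite /asc /mulD /=; apply: pair_eq0 => /=.
  by apply: (addHyp (hAR x1 x2 x3)); rewrite /assoc; grp.
rewrite ?(bilin_addr rb) ?(bilin_addl mVb) ?(bilin_addr lb) ?(bilin_addr mVb).
rewrite ?(bilin_addr rb) ?(bilin_addl mVb) ?(bilin_addr lb) ?(bilin_addr mVb).
apply: (addHyp (R1 x2 x3 b1)); apply: (addHyp (R3 x1 x3 b2)); apply: (addHyp (R3 x1 x2 b3)).
apply: (addHyp (B2 x1 b2 b3)); apply: (addHyp (B4 x3 b1 b2)); apply: (addHyp (B4 x2 b1 b3)).
apply: (addHyp (hVR b1 b2 b3)); rewrite /assoc; grp.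
Qed.

Lemma m0l c : m 0 c = 0. Proof. by unpack; exact: (addfun0l _ (bilin_addl mb)). Qed.
Lemma m0r c : m c 0 = 0. Proof. by unpack; exact: (addfun0r _ (bilin_addr mb)). Qed.
Lemma mV0l c : mV 0 c = 0. Proof. by unpack; exact: (addfun0l _ (bilin_addl mVb)). Qed.
Lemma mV0r c : mV c 0 = 0. Proof. by unpack; exact: (addfun0r _ (bilin_addr mVb)). Qed.
Lemma l0l c : l 0 c = 0. Proof. by unpack; exact: (addfun0l _ (bilin_addl lb)). Qed.
Lemma l0r c : l c 0 = 0. Proof. by unpack; exact: (addfun0r _ (bilin_addr lb)). Qed.
Lemma r0l c : r 0 c = 0. Proof. by unpack; exact: (addfun0l _ (bilin_addl rb)). Qed.
Lemma r0r c : r c 0 = 0. Proof. by unpack; exact: (addfun0r _ (bilin_addr rb)). Qed.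
Ltac zeros := rewrite ?m0l ?m0r ?mV0l ?mV0r ?l0l ?l0r ?r0l ?r0r ?addr0 ?add0r.
Lemma mAA x y : mulD (x, 0) (y, 0) = (m x y, 0).
Proof. by rewrite /mulD /=; zeros. Qed.
Lemma mAV x a : mulD (x, 0) (0, a) = (0, l x a).
Proof. by rewrite /mulD /=; zeros. Qed.
Lemma mVA x a : mulD (0, a) (x, 0) = (0, r x a).
Proof. by rewrite /mulD /=; zeros. Qed.
Lemma mVV a b : mulD (0, a) (0, b) = (0, mV a b).
Proof. by rewrite /mulD /=; zeros. Qed.

Notation rho := (fun x v => l x v - r x v).
Definition iA (x : A) : (A * V)%type := (x, 0).
Definition iV (a : V) : (A * V)%type := (0, a).
Lemma cAA x y : mulD (iA x) (iA y) - mulD (iA y) (iA x) = iA (commutator m x y).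
Proof. by rewrite /iA !mAA pairN oppr0 pairD addr0. Qed.
Lemma cAV x a : mulD (iA x) (iV a) - mulD (iV a) (iA x) = iV (rho x a).
Proof. by rewrite /iA /iV mAV mVA pairN oppr0 pairD addr0. Qed.
Lemma cVV a b : mulD (iV a) (iV b) - mulD (iV b) (iV a) = iV (commutator mV a b).
Proof. by rewrite /iV !mVV pairN oppr0 pairD addr0. Qed.
Lemma iVB u v : iV u - iV v = iV (u - v).
Proof. by rewrite /iV pairN oppr0 pairD addr0. Qed.
Lemma iVD u v : iV u + iV v = iV (u + v).
Proof. by rewrite /iV pairD addr0. Qed.
Ltac crunch := do 6 rewrite ?cAA ?cAV ?cVV; do 4 rewrite ?iVB ?iVD; move/(congr1 snd) => /=.

Lemma T4D x y a b : rho (commutator m x y) (commutator mV a b) =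
     rho x (commutator mV (rho y a) b) - commutator mV (rho y (rho x a)) b
     - commutator mV (rho x (rho y b)) a + rho y (commutator mV (rho x b) a).
Proof.
have := @gen_T4 _ mulD addLD addRD altLD altRD (iA x) (iA y) (iV a) (iV b).
by crunch.
Qed.

Lemma T5D x y a b : commutator mV (rho x a) (rho y b) =
     commutator mV (rho (commutator m x y) a) b - rho x (commutator mV (rho y a) b)
     + rho y (rho x (commutator mV a b)) + commutator mV (rho y (rho x b)) a.
Proof.
have := @gen_T5 _ mulD addLD addRD altLD altRD (iA x) (iA y) (iV a) (iV b).
by crunch.
Qed.

Lemma T6D x a b c : commutator mV (rho x a) (commutator mV b c) =
     commutator mV (commutator mV (rho x b) a) c - rho x (commutator mV (commutator mV b a) c)
     - commutator mV (rho x (commutator mV a c)) b - commutator mV (commutator mV (rho x c) b) a.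
Proof.
have := @gen_T6 _ mulD addLD addRD altLD altRD (iA x) (iV a) (iV b) (iV c).
by crunch.
Qed.

Lemma repD x y z v : rho (commutator m (commutator m x y) z) v =
     rho x (rho y (rho z v)) - rho z (rho x (rho y v))
     + rho y (rho (commutator m z x) v) - rho (commutator m y z) (rho x v).
Proof.
have := @gen_rep _ mulD addLD addRD altLD altRD (iA x) (iA y) (iA z) (iV v).
by crunch.
Qed.
End Semi.
Arguments repD {F A V m mV l r}.
Arguments T4D {F A V m mV l r}.
Arguments T5D {F A V m mV l r}.
Arguments T6D {F A V m mV l r}.
Arguments malcev_alt {F A m}.

Theorem proposition4p4 (F : fieldType) (A V : lmodType F)
  (m : A -> A -> A) (mV : V -> V -> V) (l r : A -> V -> V) :
  [pchar F] =i pred0 ->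
  alternative m ->
  bimodule_alternative m mV l r ->
  module_malcev (commutator m) (commutator mV) (fun x v => l x v - r x v).
Proof.
move=> hc hA hB.
split; first exact: malcev_alt hc hA.
split; first exact: malcev_alt hc hB.1.
split.
  split; last exact: (repD hA hB).
  case: hB => _ [[lb [rb _]] _].
  case: lb => lb1 lb2; case: rb => rb1 rb2.
  by split=> a x1 x2 y /=; rewrite ?lb1 ?rb1 ?lb2 ?rb2 scalerBr; grp.
split; first exact: (T4D hA hB).
split; first exact: (T5D hA hB).
exact: (T6D hA hB).
Qed.
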